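(* (1) Let $(A,\cdot,[-,-])$ be a transposed Poisson algebra and $\mathcal{B}$ a nondegenerate skew-symmetric bilinear form on $A$ that is a Connes cocycle on $(A,\cdot)$ and a symplectic form on $(A,[-,-])$. Define $\star,\circ$ by $\mathcal{B}(x\star y,z)=\mathcal{B}(y,x\cdot z)$ and $\mathcal{B}(x\circ y,z)=-\mathcal{B}(y,[x,z])$. Then $(A,\star,\circ)$ is a TZPD algebra with $x\star y+y\star x=x\cdot y$ and $x\circ y-y\circ x=[x,y]$. (2) Conversely, let $(A,\star,\circ)$ be a TZPD algebra, $x\cdot y=x\star y+y\star x$, $[x,y]=x\circ y-y\circ x$. Then $A\ltimes_{-\mathcal{L}^*_{\star},\mathcal{L}^*_{\circ}}A^*$ is a transposed Poisson algebra, and $\mathcal{B}_p$ is a Connes cocycle on its commutative associative product and a symplectic form on its Lie bracket.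
   Context: Finite-dimensional spaces, characteristic zero. $\mathcal{L}_\ast(x)y=x\ast y$; $\langle\rho^*(x)v^*,u\rangle=-\langle v^*,\rho(x)u\rangle$. For $(A,\cdot,[-,-])$ and linear $\mu,\rho:A\to\mathrm{End}(V)$, $A\ltimes_{\mu,\rho}V$ is $A\oplus V$ with $(x,u)\cdot(y,v)=(x\cdot y,\mu(x)v+\mu(y)u)$, $[(x,u),(y,v)]=([x,y],\rho(x)v-\rho(y)u)$. $\mathcal{B}_p((x,a^* ),(y,b^* ))=\langle x,b^*\rangle-\langle a^*,y\rangle$. Connes cocycle on $(A,\cdot)$: skew-symmetric $\mathcal{B}$ with $\mathcal{B}(x\cdot y,z)+\mathcal{B}(y\cdot z,x)+\mathcal{B}(z\cdot x,y)=0$; symplectic form on a Lie algebra: nondegenerate skew-symmetric $\mathcal{B}$ with $\mathcal{B}([x,y],z)+\mathcal{B}([y,z],x)+\mathcal{B}([z,x],y)=0$. Transposed Poisson algebra: $(A,\cdot)$ commutative associative, $(A,[-,-])$ Lie, $2z\cdot[x,y]=[z\cdot x,y]+[x,z\cdot y]$. Zinbiel: $x\star(y\star z)=(x\star y)\star z+(y\star x)\star z$. Pre-Lie: $(x\circ y)\circ z-x\circ(y\circ z)=(y\circ x)\circ z-y\circ(x\circ z)$. A TZPD algebra is $(A,\star,\circ)$ with $(A,\star)$ Zinbiel, $(A,\circ)$ pre-Lie, and for all $x,y,z$: $2y\circ(x\star z)=(x\star y+y\star x)\circ z+x\star(y\circ z)$; $2(x\circ y-y\circ x)\star z=x\star(y\circ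 z)-y\star(x\circ z)$; $y\circ(x\star z+z\star x)-x\circ(y\star z+z\star y)+z\star(x\circ y-y\circ x)=0$. *)

(* Defs.v *)
From HB Require Import structures.
From mathcomp Require Import all_boot all_order all_algebra.
Set Implicit Arguments. Unset Strict Implicit. Unset Printing Implicit Defensive.
Import GRing.Theory.
Local Open Scope ring_scope.

(* Conventions: K is a field (char 0 assumed in the theorem), the
   finite-dimensional space A is K^n = 'rV[K]_n, its dual A^* is also
   'rV[K]_n with the canonical pairing <a, u> = \sum_i a_i u_i. *)

Section Defs.
Variable K : fieldType.

Section Generic.
Variable V : lmodType K.

Definition bilin_op (m : V -> V -> V) : Prop :=
  (forall (a : K) x y z, m (a *: x + y) z = a *: m x z + m y z) /\
  (forall (a : K) x y z, m z (a *: x + y) = a *: m z x + m z y).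

Definition bilin_form (B : V -> V -> K) : Prop :=
  (forall (a : K) x y z, B (a *: x + y) z = a * B x z + B y z) /\
  (forall (a : K) x y z, B z (a *: x + y) = a * B z x + B z y).

Definition skew_form (B : V -> V -> K) : Prop :=
  forall x y, B x y = - B y x.

Definition nondeg_form (B : V -> V -> K) : Prop :=
  forall x, (forall y, B x y = 0) -> x = 0.

Definition connes_cocycle (dot : V -> V -> V) (B : V -> V -> K) : Prop :=
  bilin_form B /\ skew_form B /\
  forall x y z, B (dot x y) z + B (dot y z) x + B (dot z x) y = 0.

Definition symplectic_form (br : V -> V -> V) (B : V -> V -> K) : Prop :=
  bilin_form B /\ nondeg_form B /\ skew_form B /\
  forall x y z, B (br x y) z + B (br y z) x + B (br z x) y = 0.

Definition comm_assoc_alg (dot : V -> V -> V) : Prop :=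
  bilin_op dot /\ (forall x y, dot x y = dot y x) /\
  (forall x y z, dot (dot x y) z = dot x (dot y z)).

Definition lie_alg (br : V -> V -> V) : Prop :=
  bilin_op br /\ (forall x, br x x = 0) /\
  (forall x y z, br x (br y z) + br y (br z x) + br z (br x y) = 0).

Definition transposed_poisson (dot br : V -> V -> V) : Prop :=
  comm_assoc_alg dot /\ lie_alg br /\
  forall x y z, dot z (br x y) *+ 2 = br (dot z x) y + br x (dot z y).

Definition zinbiel (star : V -> V -> V) : Prop :=
  bilin_op star /\
  forall x y z, star x (star y z) = star (star x y) z + star (star y x) z.

Definition pre_lie (circ : V -> V -> V) : Prop :=
  bilin_op circ /\
  forall x y z, circ (circ x y) z - circ x (circ y z)
              = circ (circ y x) z - circ y (circ x z).

Definition TZPD (star circ : V -> V -> V) : Prop :=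
  zinbiel star /\ pre_lie circ /\
  (forall x y z, circ y (star x z) *+ 2
                 = circ (star x y + star y x) z + star x (circ y z)) /\
  (forall x y z, star (circ x y - circ y x) z *+ 2
                 = star x (circ y z) - star y (circ x z)) /\
  (forall x y z, circ y (star x z + star z x) - circ x (star y z + star z y)
                 + star z (circ x y - circ y x) = 0).
End Generic.

Section Coord.
Variable n : nat.

Definition pairing (a u : 'rV[K]_n) : K := \sum_(i < n) a 0 i * u 0 i.

(* dual representation rho' with <rho'(x) a, u> = - <a, rho(x) u> *)
Definition dual_rep (rho : 'rV[K]_n -> 'rV[K]_n -> 'rV[K]_n)
  : 'rV[K]_n -> 'rV[K]_n -> 'rV[K]_n :=
  fun x a => \row_j (- pairing a (rho x (delta_mx 0 j))).

Definition sd_prod_mul (dot : 'rV[K]_n -> 'rV[K]_n -> 'rV[K]_n)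
  (mu : 'rV[K]_n -> 'rV[K]_n -> 'rV[K]_n) :
  'rV[K]_n * 'rV[K]_n -> 'rV[K]_n * 'rV[K]_n -> 'rV[K]_n * 'rV[K]_n :=
  fun p q => (dot p.1 q.1, mu p.1 q.2 + mu q.1 p.2).

Definition sd_prod_br (br : 'rV[K]_n -> 'rV[K]_n -> 'rV[K]_n)
  (rho : 'rV[K]_n -> 'rV[K]_n -> 'rV[K]_n) :
  'rV[K]_n * 'rV[K]_n -> 'rV[K]_n * 'rV[K]_n -> 'rV[K]_n * 'rV[K]_n :=
  fun p q => (br p.1 q.1, rho p.1 q.2 - rho q.1 p.2).

Definition Bp (p q : 'rV[K]_n * 'rV[K]_n) : K :=
  pairing q.2 p.1 - pairing p.2 q.1.
End Coord.
End Defs.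

(* Main.v *)
Require Import Defs.
From mathcomp Require Import all_boot all_order all_algebra.
From mathcomp Require Import ring.
Local Open Scope ring_scope.
Set Implicit Arguments. Unset Strict Implicit. Unset Printing Implicit Defensive.
Import GRing.Theory.

Section Gen.
Variable K : fieldType.
Variable V : lmodType K.

Section Op.
Variable m : V -> V -> V.
Hypothesis hm : bilin_op m.
Lemma mDl x y z : m (x + y) z = m x z + m y z.
Proof. by have := (hm.1 1 x y z); rewrite !scale1r. Qed.
Lemma mDr x y z : m z (x + y) = m z x + m z y.
Proof. by have := (hm.2 1 x y z); rewrite !scale1r. Qed.
Lemma m0l z : m 0 z = 0.
Proof. have h := mDl 0 0 z; rewrite addr0 in h. by apply: (addrI (m 0 z)); rewrite addr0 -h. Qed.
Lemma m0r z : m z 0 = 0.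
Proof. have h := mDr 0 0 z; rewrite addr0 in h. by apply: (addrI (m z 0)); rewrite addr0 -h. Qed.
Lemma mZl a x z : m (a *: x) z = a *: m x z.
Proof. by have := (hm.1 a x 0 z); rewrite !addr0 m0l addr0. Qed.
Lemma mZr a x z : m z (a *: x) = a *: m z x.
Proof. by have := (hm.2 a x 0 z); rewrite !addr0 m0r addr0. Qed.
Lemma mNl x z : m (- x) z = - m x z.
Proof. by rewrite -scaleN1r mZl scaleN1r. Qed.
Lemma mNr x z : m z (- x) = - m z x.
Proof. by rewrite -scaleN1r mZr scaleN1r. Qed.
Lemma mBl x y z : m (x - y) z = m x z - m y z.
Proof. by rewrite mDl mNl. Qed.
Lemma mBr x y z : m z (x - y) = m z x - m z y.
Proof. by rewrite mDr mNr. Qed.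
End Op.

Section Form.
Variable B : V -> V -> K.
Hypothesis hB : bilin_form B.
Lemma FDl x y z : B (x + y) z = B x z + B y z.
Proof. by have := (hB.1 1 x y z); rewrite scale1r mul1r. Qed.
Lemma FDr x y z : B z (x + y) = B z x + B z y.
Proof. by have := (hB.2 1 x y z); rewrite scale1r mul1r. Qed.
Lemma F0l z : B 0 z = 0.
Proof. have h := FDl 0 0 z; rewrite addr0 in h. by apply: (addrI (B 0 z)); rewrite addr0 -h. Qed.
Lemma F0r z : B z 0 = 0.
Proof. have h := FDr 0 0 z; rewrite addr0 in h. by apply: (addrI (B z 0)); rewrite addr0 -h. Qed.
Lemma FZl a x z : B (a *: x) z = a * B x z.
Proof. by have := (hB.1 a x 0 z); rewrite !addr0 F0l addr0. Qed.
Lemma FZr a x z : B z (a *: x) = a * B z x.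
Proof. by have := (hB.2 a x 0 z); rewrite !addr0 F0r addr0. Qed.
Lemma FNl x z : B (- x) z = - B x z.
Proof. by rewrite -scaleN1r FZl mulN1r. Qed.
Lemma FNr x z : B z (- x) = - B z x.
Proof. by rewrite -scaleN1r FZr mulN1r. Qed.
Lemma FBl x y z : B (x - y) z = B x z - B y z.
Proof. by rewrite FDl FNl. Qed.
Lemma FBr x y z : B z (x - y) = B z x - B z y.
Proof. by rewrite FDr FNr. Qed.
End Form.
End Gen.

Lemma lstepE (R : comNzRingType) (G a b : R) (c : R) :
  a = b -> G - c * (a - b) = 0 -> G = 0.
Proof. by move=> ->; rewrite subrr mulr0 subr0. Qed.

Lemma nat_neq0 (K : fieldType) (hchar : [pchar K] =i pred0) k :
  (0 < k)%N -> (k%:R : K) != 0.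
Proof.
move=> k0; apply/negP => /(natf0_pchar k0) [p]; by rewrite hchar.
Qed.
Arguments lstepE {R G a b} c _ _.

Ltac ex1 hB hd hb := rewrite ?(mulr2n, FDl hB, FDr hB, FBl hB, FBr hB, FNl hB, FNr hB, F0l hB, F0r hB,
  mDl hd, mDr hd, mBl hd, mBr hd, mNl hd, mNr hd, m0l hd, m0r hd,
  mDl hb, mDr hb, mBl hb, mBr hb, mNl hb, mNr hb, m0l hb, m0r hb).
Ltac ex1s hB hd hb hst hci hs hc := rewrite ?(mulr2n, FDl hB, FDr hB, FBl hB, FBr hB, FNl hB, FNr hB, F0l hB, F0r hB,
  mDl hd, mDr hd, mBl hd, mBr hd, mNl hd, mNr hd, m0l hd, m0r hd,
  mDl hb, mDr hb, mBl hb, mBr hb, mNl hb, mNr hb, m0l hb, m0r hb,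
  mDl hst, mDr hst, mBl hst, mBr hst, mNl hst, mNr hst, m0l hst, m0r hst,
  mDl hci, mDr hci, mBl hci, mBr hci, mNl hci, mNr hci, m0l hci, m0r hci, hs, hc).

Lemma lscale (K : fieldType) (G c : K) : c != 0 -> G * c = 0 -> G = 0.
Proof. by move=> c0 /eqP; rewrite mulf_eq0 (negbTE c0) orbF => /eqP. Qed.

Lemma part1 (K : fieldType) (V : lmodType K) (hchar : [pchar K] =i pred0)
 (dot br : V -> V -> V) (B : V -> V -> K) (star circ : V -> V -> V) :
 transposed_poisson dot br ->
 bilin_form B -> nondeg_form B -> skew_form B ->
 connes_cocycle dot B -> symplectic_form br B ->
 (forall x y z, B (star x y) z = B y (dot x z)) ->
 (forall x y z, B (circ x y) z = - B y (br x z)) ->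
 TZPD star circ /\
 (forall x y, star x y + star y x = dot x y) /\
 (forall x y, circ x y - circ y x = br x y).
Proof.
move=> [[hd [dC dA]] [[hb [bxx jac]] tp]] hB hnd hsk [_ [_ cB]] [_ [_ [_ sB]]] hs hc.
have eqB : forall u v, (forall w, B u w = B v w) -> u = v.
  move=> u v h; apply/eqP; rewrite -subr_eq0; apply/eqP; apply: hnd => w.
  by rewrite (FBl hB) h subrr.
have bC : forall x y, br x y = - br y x.
  move=> x y; have := bxx (x + y); rewrite !(mDl hb, mDr hb) !bxx add0r addr0.
  by move/eqP; rewrite addr_eq0 => /eqP.
have hst : bilin_op star.
  split=> a x y z; apply: eqB => w; ex1 hB hd hb; rewrite !hs; ex1 hB hd hb;
    rewrite ?(FZl hB, FZr hB, mZl hd, mZr hd) ?hs //.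
have hci : bilin_op circ.
  split=> a x y z; apply: eqB => w; ex1 hB hd hb; rewrite !hc; ex1 hB hd hb;
    rewrite ?(FZl hB, FZr hB, mZl hb, mZr hb) ?hc; ex1 hB hd hb; ring.
have sumS : forall x y, star x y + star y x = dot x y.
  move=> x y; apply: eqB => w; ex1 hB hd hb; rewrite !hs.
  have f1 := cB x y w.
  have f2 := hsk y (dot x w).
  have f3 := hsk x (dot y w).
  have f4 := congr1 (fun v => B v y) (dC w x).
  simpl in f4.
  apply: subr0_eq.
  apply: (lstepE 1 f2); apply: (lstepE 1 f3); apply: (lstepE (-1) f1).
  apply: (lstepE 1 f4); ring.
have sumC : forall x y, circ x y - circ y x = br x y.
  move=> x y; apply: eqB => w; ex1 hB hd hb; rewrite !hc.
  have h1 := hsk y (br x w).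
  have h2 := hsk x (br y w).
  have h3 := congr1 (fun v => B v y) (bC w x); simpl in h3; move: h3; ex1 hB hd hb; move=> h3.
  have f := sB x y w.
  apply: subr0_eq.
  apply: (lstepE (-1) h1); apply: (lstepE 1 h2); apply: (lstepE (-1) f).
  apply: (lstepE 1 h3); ring.
have two : (2%:R : K) != 0 by apply: nat_neq0.
have three : (3%:R : K) != 0 by apply: nat_neq0.
have SZ : forall x y z w, B (dot (br y w) x) z - B (dot (br x w) y) z + B (dot w (br x y)) z = 0.
  move=> x y z w; apply: (lscale two).
  have E1 := congr1 (fun v => B v z) (dC (br y w) x); simpl in E1.
  have E2 := congr1 (fun v => B v z) (dC (br x w) y); simpl in E2.
  have E3 := congr1 (fun v => B (dot y v) z) (bC w x); simpl in E3; move: E3; ex1 hB hd hb; move=> E3.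
  have T1 := congr1 (fun v => B v z) (tp y w x); simpl in T1; move: T1; ex1 hB hd hb; move=> T1.
  have T2 := congr1 (fun v => B v z) (tp w x y); simpl in T2; move: T2; ex1 hB hd hb; move=> T2.
  have T3 := congr1 (fun v => B v z) (tp x y w); simpl in T3; move: T3; ex1 hB hd hb; move=> T3.
  have D1 := congr1 (fun v => B (br w v) z) (dC y x); simpl in D1.
  have D2 := congr1 (fun v => B (br v y) z) (dC w x); simpl in D2.
  have D3 := congr1 (fun v => B (br x v) z) (dC w y); simpl in D3.
  have K1 := congr1 (fun v => B v z) (bC (dot x y) w); simpl in K1; move: K1; ex1 hB hd hb; move=> K1.
  have K2 := congr1 (fun v => B v z) (bC y (dot x w)); simpl in K2; move: K2; ex1 hB hd hb; move=> K2.
  have K3 := congr1 (fun v => B v z) (bC (dot y w) x); simpl in K3; move: K3; ex1 hB hd hb; move=> K3.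
  apply: (lstepE 2%:R E1); apply: (lstepE (-2%:R) E2); apply: (lstepE (-2%:R) E3).
  apply: (lstepE 1 T1); apply: (lstepE 1 T2); apply: (lstepE 1 T3).
  apply: (lstepE 1 D1); apply: (lstepE 1 D2); apply: (lstepE 1 D3).
  apply: (lstepE 1 K1); apply: (lstepE 1 K2); apply: (lstepE 1 K3).
  ring.
split; last by split.
split; first split=> // x y z.
  rewrite -(mDl hst) sumS; apply: eqB => w; rewrite !hs; congr (B z _).
  by rewrite dA -dA (dC y x) dA.
split.
  split=> // x y z; apply: eqB => w; ex1s hB hd hb hst hci hs hc.
  have F1 := congr1 (fun v => B z (br v w)) (sumC x y); simpl in F1; move: F1; ex1 hB hd hb; move=> F1.
  have J := congr1 (fun v => B z v) (jac x y w); simpl in J.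
  rewrite (bC w x) (bC w (br x y)) in J; move: J; ex1 hB hd hb; move=> J.
  apply: subr0_eq.
  apply: (lstepE (-1) F1); apply: (lstepE 1 J); ring.
split.
  move=> x y z; rewrite sumS; apply: eqB => w; ex1s hB hd hb hst hci hs hc.
  have T := congr1 (fun v => B z v) (tp y w x); simpl in T; move: T; ex1 hB hd hb; move=> T.
  apply: subr0_eq; apply: (lstepE (-1) T); ring.
split.
  move=> x y z; rewrite sumC; apply: eqB => w; ex1s hB hd hb hst hci hs hc.
  have T := tp x y w.
  rewrite (dC w (br x y)) (dC w x) (dC w y) (bC (dot x w) y) in T.
  have T' := congr1 (fun v => B z v) T; simpl in T'; move: T'; ex1 hB hd hb; move=> T'.
  apply: subr0_eq; apply: (lstepE 1 T'); ring.
move=> x y z; rewrite !sumS sumC; apply: eqB => w; ex1s hB hd hb hst hci hs hc.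
apply: (lscale three).
have C1 := cB x z (br y w).
have C2 := cB y z (br x w).
have C3 := cB z w (br x y).
have Sk := hsk (br x y) (dot z w).
have SZ' := SZ x y z w.
have T1 := congr1 (fun v => B v x) (tp y w z); simpl in T1; move: T1; ex1 hB hd hb; move=> T1.
have T2 := congr1 (fun v => B v y) (tp x w z); simpl in T2; move: T2; ex1 hB hd hb; move=> T2.
have T3 := congr1 (fun v => B v w) (tp x y z); simpl in T3; move: T3; ex1 hB hd hb; move=> T3.
have D3 := congr1 (fun v => B v w) (dC (br x y) z); simpl in D3.
have S1 := sB (dot z y) w x.
have S2 := sB (dot z x) w y.
have S3 := sB x y (dot z w).
have Bc1 := congr1 (fun v => B v w) (bC (dot z x) y); simpl in Bc1; move: Bc1; ex1 hB hd hb; move=> Bc1.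
have Bc2 := congr1 (fun v => B v y) (bC x (dot z w)); simpl in Bc2; move: Bc2; ex1 hB hd hb; move=> Bc2.
have Bc3 := congr1 (fun v => B v (dot z y)) (bC w x); simpl in Bc3; move: Bc3; ex1 hB hd hb; move=> Bc3.
have Sk3 := hsk (br x w) (dot z y).
have D4 := congr1 (fun v => B v (br x w)) (dC z y); simpl in D4.
have Bc4 := congr1 (fun v => B v (dot z x)) (bC w y); simpl in Bc4; move: Bc4; ex1 hB hd hb; move=> Bc4.
have Sk4 := hsk (br y w) (dot z x).
have D5 := congr1 (fun v => B v (br y w)) (dC z x); simpl in D5.
apply: (lstepE (-2%:R) C1); apply: (lstepE 2%:R C2); apply: (lstepE (-2%:R) C3).
apply: (lstepE 2%:R Sk); apply: (lstepE 2%:R SZ').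
apply: (lstepE 1 T1); apply: (lstepE (-1) T2); apply: (lstepE 1 T3).
apply: (lstepE 2%:R D3).
apply: (lstepE 1 S1); apply: (lstepE (-1) S2); apply: (lstepE 1 S3).
apply: (lstepE 1 Bc1); apply: (lstepE (-1) Bc2); apply: (lstepE (-1) Bc3).
apply: (lstepE 1 Sk3); apply: (lstepE (-1) D4); apply: (lstepE 1 Bc4).
apply: (lstepE (-1) Sk4); apply: (lstepE 1 D5).
ring.
Qed.

Section P2.
Variables (K : fieldType) (n : nat).
Local Notation V := 'rV[K]_n.

Lemma hP : bilin_form (@pairing K n).
Proof.
rewrite /pairing; split=> a x y z; rewrite mulr_sumr -big_split; apply: eq_bigr => i _ /=;
  rewrite !mxE; ring.
Qed.

Lemma pair_sym (a u : V) : pairing a u = pairing u a.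
Proof. by rewrite /pairing; apply: eq_bigr => i _; rewrite mulrC. Qed.

Lemma pair_e (a : V) j : pairing a (delta_mx 0 j) = a 0 j.
Proof.
rewrite /pairing (bigD1 j) //= big1 ?addr0; first by rewrite mxE !eqxx mulr1.
by move=> i /negPf ij; rewrite mxE ij andbF mulr0.
Qed.

Lemma eqL (a b : V) : (forall u, pairing a u = pairing b u) -> a = b.
Proof. by move=> h; apply/rowP => j; rewrite -(pair_e a) -(pair_e b) h. Qed.

Lemma eqR (u v : V) : (forall c, pairing c u = pairing c v) -> u = v.
Proof. by move=> h; apply: eqL => c; rewrite pair_sym h pair_sym. Qed.

Lemma lin_sum (f : V -> K) : (forall c u v, f (c *: u + v) = c * f u + f v) ->
  forall u, f u = \sum_j u 0 j * f (delta_mx 0 j).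
Proof.
move=> hf u; rewrite {1}(row_sum_delta u).
have f0 : f 0 = 0.
  have := hf 1 0 0; rewrite scale1r addr0 mul1r => h.
  by apply: (addrI (f 0)); rewrite addr0 -h.
elim/big_rec2: _ => [//|j s t _ <-]; by rewrite hf.
Qed.

Lemma pd (rho : V -> V -> V) : bilin_op rho ->
  forall x a u, pairing (dual_rep rho x a) u = - pairing a (rho x u).
Proof.
move=> hr x a u.
rewrite (@lin_sum (fun v => pairing a (rho x v))); last first.
  by move=> c v w; rewrite (mDr hr) (mZr hr) (FDr hP) (FZr hP).
rewrite /pairing /dual_rep -sumrN; apply: eq_bigr => j _.
by rewrite mxE mulrC mulrN.
Qed.

Lemma bd (rho : V -> V -> V) : bilin_op rho -> bilin_op (dual_rep rho).
Proof.
move=> hr; split=> c x y z; apply: eqL => u;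
  rewrite ?(FDl hP, FZl hP) !(pd hr) ?(mDl hr, mZl hr, FDl hP, FZl hP, FDr hP, FZr hP); ring.
Qed.
End P2.
Arguments hP {K n}.

Ltac ex2 hst hci := rewrite ?(mulr2n, FDl hP, FDr hP, FBl hP, FBr hP, FNl hP, FNr hP, F0l hP, F0r hP, FZl hP, FZr hP,
  mDl hst, mDr hst, mBl hst, mBr hst, mNl hst, mNr hst, m0l hst, m0r hst, mZl hst, mZr hst,
  mDl hci, mDr hci, mBl hci, mBr hci, mNl hci, mNr hci, m0l hci, m0r hci, mZl hci, mZr hci,
  pd hst, pd hci, opprK).
Ltac fa H t hst hci := have H := t; simpl in H; move: H; ex2 hst hci; move=> H.

Lemma peq (T1 T2 : Type) (u v : T1 * T2) : u.1 = v.1 -> u.2 = v.2 -> u = v.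
Proof. by case: u v => [? ?] [? ?] /= -> ->. Qed.

Lemma part2 (K : fieldType) (n : nat) (star circ : 'rV[K]_n -> 'rV[K]_n -> 'rV[K]_n) :
  TZPD star circ ->
  let dot := fun x y => star x y + star y x in
  let br := fun x y => circ x y - circ y x in
  let P := sd_prod_mul dot (fun x a => - dual_rep star x a) in
  let Q := sd_prod_br br (dual_rep circ) in
  transposed_poisson P Q /\ connes_cocycle P (@Bp K n) /\ symplectic_form Q (@Bp K n).
Proof.
move=> [[hst zin] [[hci pl] [id3 [id4 id5]]]] dot br P Q.
subst P Q dot br.
have hBp : bilin_form (@Bp K n).
  rewrite /Bp; split=> c [x a] [y b] [z d] /=; ex2 hst hci; ring.
have skBp : skew_form (@Bp K n) by rewrite /Bp => [[x a] [y b]] /=; ring.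
split; last split.
- split; [split; [|split]|split; [split; [|split]|]].
  +
    rewrite /sd_prod_mul; split=> c [x a] [y b] [z d]; apply: peq => /=.
    * by apply: eqR => e; ex2 hst hci; ring.
    * by apply: eqL => e; ex2 hst hci; ring.
    * by apply: eqR => e; ex2 hst hci; ring.
    * by apply: eqL => e; ex2 hst hci; ring.
  + by rewrite /sd_prod_mul => [[x a] [y b]]; apply: peq; rewrite /= addrC.
  + rewrite /sd_prod_mul => [[x a] [y b] [z d]]; apply: peq => /=.
    * apply: eqR => e; ex2 hst hci.
      fa F1 (congr1 (pairing e) (zin x y z)) hst hci.
      fa F2 (congr1 (pairing e) (zin y z x)) hst hci.
      fa F3 (congr1 (pairing e) (zin z y x)) hst hci.
      fa F4 (congr1 (pairing e) (zin z x y)) hst hci.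
      fa F5 (congr1 (pairing e) (zin x z y)) hst hci.
      fa F6 (congr1 (pairing e) (zin y x z)) hst hci.
      apply: subr0_eq.
      apply: (lstepE (-1) F1); apply: (lstepE 1 F3); apply: (lstepE 1 F4); apply: (lstepE (-1) F5); ring.
    * apply: eqL => u; ex2 hst hci.
      fa F1 (congr1 (pairing a) (zin y z u)) hst hci.
      fa F2 (congr1 (pairing a) (zin z y u)) hst hci.
      fa F3 (congr1 (pairing b) (zin x z u)) hst hci.
      fa F4 (congr1 (pairing b) (zin z x u)) hst hci.
      fa F5 (congr1 (pairing d) (zin x y u)) hst hci.
      fa F6 (congr1 (pairing d) (zin y x u)) hst hci.
      apply: subr0_eq.
      apply: (lstepE 1 F1); apply: (lstepE 1 F3); apply: (lstepE (-1) F4); apply: (lstepE (-1) F6); ring.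
  + rewrite /sd_prod_br; split=> c [x a] [y b] [z d]; apply: peq => /=.
    * by apply: eqR => e; ex2 hst hci; ring.
    * by apply: eqL => e; ex2 hst hci; ring.
    * by apply: eqR => e; ex2 hst hci; ring.
    * by apply: eqL => e; ex2 hst hci; ring.
  + by rewrite /sd_prod_br => [[x a]]; apply: peq; rewrite /= subrr.
  + rewrite /sd_prod_br => [[x a] [y b] [z d]]; apply: peq => /=.
    * apply: eqR => e; ex2 hst hci.
      fa F1 (congr1 (pairing e) (pl x y z)) hst hci.
      fa F2 (congr1 (pairing e) (pl y z x)) hst hci.
      fa F3 (congr1 (pairing e) (pl z x y)) hst hci.
      fa F4 (congr1 (pairing e) (pl y x z)) hst hci.
      fa F5 (congr1 (pairing e) (pl z y x)) hst hci.
      fa F6 (congr1 (pairing e) (pl x z y)) hst hci.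
      apply: subr0_eq.
      apply: (lstepE (-1) F1); apply: (lstepE (-1) F2); apply: (lstepE (-1) F3); ring.
    * apply: eqL => u; ex2 hst hci.
      fa F1 (congr1 (pairing a) (pl y z u)) hst hci.
      fa F2 (congr1 (pairing a) (pl z y u)) hst hci.
      fa F3 (congr1 (pairing b) (pl x z u)) hst hci.
      fa F4 (congr1 (pairing b) (pl z x u)) hst hci.
      fa F5 (congr1 (pairing d) (pl x y u)) hst hci.
      fa F6 (congr1 (pairing d) (pl y x u)) hst hci.
      apply: subr0_eq.
      apply: (lstepE 1 F1); apply: (lstepE (-1) F3); apply: (lstepE 1 F5); ring.
  + rewrite /sd_prod_br /sd_prod_mul => [[x a] [y b] [z d]]; apply: peq => /=.
    * apply: eqR => e; ex2 hst hci.
      fa F1 (congr1 (pairing e) (id5 x y z)) hst hci.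
      fa F2 (congr1 (pairing e) (id4 x y z)) hst hci.
      fa F3 (congr1 (pairing e) (id3 z x y)) hst hci.
      fa F4 (congr1 (pairing e) (id3 z y x)) hst hci.
      fa F5 (congr1 (pairing e) (id3 x y z)) hst hci.
      fa F6 (congr1 (pairing e) (id3 y x z)) hst hci.
      fa F7 (congr1 (pairing e) (id3 x z y)) hst hci.
      fa F8 (congr1 (pairing e) (id3 y z x)) hst hci.
      fa F9 (congr1 (pairing e) (id4 y x z)) hst hci.
      fa F10 (congr1 (pairing e) (id5 y x z)) hst hci.
      apply: subr0_eq.
      apply: (lstepE 3%:R F1); apply: (lstepE 1 F2); apply: (lstepE 1 F3); apply: (lstepE (-1) F4); apply: (lstepE (-1) F5); apply: (lstepE 1 F6); ring.
    * apply: eqL => u; ex2 hst hci.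
      fa F1 (congr1 (pairing d) (id4 x y u)) hst hci.
      fa F2 (congr1 (pairing b) (id3 z x u)) hst hci.
      fa F3 (congr1 (pairing a) (id3 z y u)) hst hci.
      apply: subr0_eq.
      apply: (lstepE 1 F1); apply: (lstepE (-1) F2); apply: (lstepE 1 F3); ring.
- split; first exact: hBp.
  split; first exact: skBp.
  rewrite /Bp /sd_prod_mul => [[x a] [y b] [z d]] /=; ex2 hst hci; ring.
- split; first exact: hBp.
  split.
    move=> [x a] h; apply: peq => /=.
      apply: eqR => u; have := h (0, u); rewrite /Bp /= (F0r hP) subr0 => ->.
      by rewrite (F0r hP).
    apply: eqL => u; have := h (u, 0); rewrite /Bp /= (F0l hP) sub0r => /eqP.
    by rewrite oppr_eq0 (F0l hP) => /eqP.
  split; first exact: skBp.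
  rewrite /Bp /sd_prod_br => [[x a] [y b] [z d]] /=; ex2 hst hci; ring.
Qed.

Unset Implicit Arguments. Set Strict Implicit.

Theorem mainTheorem19 (K : fieldType) (n : nat)
  (hchar : [pchar K] =i pred0) :
  (* (1) *)
  (forall (dot br : 'rV[K]_n -> 'rV[K]_n -> 'rV[K]_n)
          (B : 'rV[K]_n -> 'rV[K]_n -> K)
          (star circ : 'rV[K]_n -> 'rV[K]_n -> 'rV[K]_n),
     transposed_poisson dot br ->
     bilin_form B -> nondeg_form B -> skew_form B ->
     connes_cocycle dot B -> symplectic_form br B ->
     (forall x y z, B (star x y) z = B y (dot x z)) ->
     (forall x y z, B (circ x y) z = - B y (br x z)) ->
     TZPD star circ /\
     (forall x y, star x y + star y x = dot x y) /\
     (forall x y, circ x y - circ y x = br x y)) /\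
  (* (2) *)
  (forall (star circ : 'rV[K]_n -> 'rV[K]_n -> 'rV[K]_n),
     TZPD star circ ->
     let dot := fun x y => star x y + star y x in
     let br := fun x y => circ x y - circ y x in
     let P := sd_prod_mul dot (fun x a => - dual_rep star x a) in
     let Q := sd_prod_br br (dual_rep circ) in
     transposed_poisson P Q /\
     connes_cocycle P (@Bp K n) /\ symplectic_form Q (@Bp K n)).
Proof.
split.
  move=> dot br B star circ htp hB hnd hsk hcc hsy hs hc.
  exact: (part1 hchar htp hB hnd hsk hcc hsy hs hc).
exact: part2.
Qed.
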